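(* There exists a data structure for the dynamic variant of Disjoint Factors with $k=2$ that supports updates and queries in amortized time $\mathcal{O}(1)$.
   Context: Disjoint Factors with $k=2$: given $w\in\{1,2\}^\star$, decide whether there exist disjoint (contiguous) subwords $w_1,w_2$ of $w$, each of length at least $2$, with $w_i$ beginning and ending with symbol $i$. Dynamic variant: a data structure maintaining $w$ under updates replacing single symbols and answering whether the current word is a yes-instance. Word-RAM model. *)

(* Defs.v *)
From mathcomp Require Import all_boot.
From Stdlib Require Import PeanoNat.

Set Implicit Arguments.
Unset Strict Implicit.
Unset Printing Implicit Defensive.

Definition is_symbol (a : nat) : bool := (a == 1) || (a == 2).

Definition word12 (w : seq nat) : bool := all is_symbol w.

Definition factor_of (w : seq nat) (s i j : nat) : Prop :=
  [/\ i < j, j < size w, nth 0 w i = s & nth 0 w j = s].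

Definition disjoint_factors2 (w : seq nat) : Prop :=
  exists i1 j1 i2 j2,
    [/\ factor_of w 1 i1 j1, factor_of w 2 i2 j2 & (j1 < i2) || (j2 < i1)].

(* Word-RAM model.  Word size [ws]: every register / memory cell holds a     *)
(* value < 2^ws; arithmetic is modulo 2^ws.  Unit cost per instruction.      *)

Inductive binop :=
  | OAdd | OSub | OMul | ODiv | OMod | OAnd | OOr | OXor | OShl | OShr
  | OLt | OEq.

Inductive instr :=
  | IConst of nat & nat          (* IConst d k   : r_d := k mod 2^ws      *)
  | IBin of binop & nat & nat & nat (* IBin o d a b : r_d := o(r_a, r_b)  *)
  | ILoad of nat & nat           (* ILoad d a    : r_d := M[r_a]          *)
  | IStore of nat & nat          (* IStore a s   : M[r_a] := r_s          *)
  | IJz of nat & nat             (* IJz c t      : if r_c = 0 goto t      *)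
  | IJmp of nat                  (* IJmp t       : goto t                 *)
  | IHalt.

Definition program := seq instr.

Record conf := Conf { pc : nat; regs : nat -> nat; mem : nat -> nat }.

Definition wmod (ws x : nat) : nat := x %% 2 ^ ws.

Definition eval_binop (ws : nat) (o : binop) (x y : nat) : nat :=
  wmod ws match o with
  | OAdd => x + y
  | OSub => x + 2 ^ ws - y
  | OMul => x * y
  | ODiv => x %/ y
  | OMod => x %% y
  | OAnd => Nat.land x y
  | OOr => Nat.lor x y
  | OXor => Nat.lxor x y
  | OShl => x * 2 ^ y
  | OShr => x %/ 2 ^ y
  | OLt => x < y
  | OEq => x == y
  end.

Definition upd (f : nat -> nat) (k v : nat) : nat -> nat :=
  fun x => if x == k then v else f x.

(* one step; [None] when the machine has halted (IHalt or pc out of range) *)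
Definition step (ws : nat) (p : program) (s : conf) : option conf :=
  let r := regs s in
  let m := mem s in
  let n := (pc s).+1 in
  match nth IHalt p (pc s) with
  | IConst d k => Some (Conf n (upd r d (wmod ws k)) m)
  | IBin o d a b => Some (Conf n (upd r d (eval_binop ws o (r a) (r b))) m)
  | ILoad d a => Some (Conf n (upd r d (m (r a))) m)
  | IStore a x => Some (Conf n r (upd m (r a) (r x)))
  | IJz c t => Some (Conf (if r c == 0 then t else n) r m)
  | IJmp t => Some (Conf t r m)
  | IHalt => None
  end.

Fixpoint exec (ws : nat) (p : program) (fuel : nat) (s : conf)
  : option (nat * conf) :=
  match fuel with
  | 0 => None
  | f.+1 =>
      match step ws p s with
      | None => Some (0, s)
      | Some s' =>
          match exec ws p f s' with
          | Some (t, s'') => Some (t.+1, s'')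
          | None => None
          end
      end
  end.

Definition halts (ws : nat) (p : program) (s : conf) (t : nat) (s' : conf)
  : Prop :=
  exists fuel, exec ws p fuel (Conf 0 (regs s) (mem s)) = Some (t, s').

(*  - init: started with all registers 0 except r1 = n, and memory holding   *)
(*    the initial word w in cells 0..n-1 (all other cells 0);                *)
(*  - update(i,a): started with r1 = i, r2 = a (other registers and memory   *)
(*    as left by the previous operation); sets w_i := a;                     *)
(*  - query: started with registers/memory as left by the previous           *)
(*    operation; must halt with r0 <> 0 iff the current word is a            *)
(*    yes-instance.                                                          *)

Record dyn_ds := DynDS { ds_init : program; ds_update : program;
                         ds_query : program }.

Inductive operation := OpUpdate of nat & nat | OpQuery.

Definition valid_op (n : nat) (o : operation) : bool :=
  match o with
  | OpUpdate i a => (i < n) && is_symbol a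
  | OpQuery => true
  end.

Definition init_conf (w : seq nat) : conf :=
  Conf 0 (upd (fun _ => 0) 1 (size w)) (fun x => nth 0 w x).

Fixpoint serves (ws : nat) (D : dyn_ds) (ops : seq operation)
    (cur : seq nat) (s : conf) (budget : nat) : Prop :=
  match ops with
  | [::] => True
  | OpUpdate i a :: ops' =>
      exists t s',
        [/\ halts ws (ds_update D) (Conf 0 (upd (upd (regs s) 1 i) 2 a) (mem s))
              t s',
            t <= budget &
            serves ws D ops' (set_nth 0 cur i a) s' (budget - t)]
  | OpQuery :: ops' =>
      exists t s',
        [/\ halts ws (ds_query D) s t s',
            t <= budget,
            (regs s' 0 != 0 <-> disjoint_factors2 cur) &
            serves ws D ops' cur s' (budget - t)]
  end.

Definition runs_within (ws : nat) (D : dyn_ds) (w : seq nat)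
    (ops : seq operation) (budget : nat) : Prop :=
  exists t s,
    [/\ halts ws (ds_init D) (init_conf w) t s,
        t <= budget &
        serves ws D ops w s (budget - t)].

(* Main.v *)
Require Import Defs.
From mathcomp Require Import all_boot zify.

Lemma cnt12 u : word12 u -> count (pred1 1) u + count (pred1 2) u = size u.
Proof.
elim: u => //= x u IH /andP[hx hu]; rewrite -IH //.
by case/orP: hx => /eqP -> /=; lia.
Qed.

Lemma word12_take k w : word12 w -> word12 (take k w).
Proof. by rewrite -{1}(cat_take_drop k w) /word12 all_cat => /andP[]. Qed.

Lemma word12_drop k w : word12 w -> word12 (drop k w).
Proof. by rewrite -{1}(cat_take_drop k w) /word12 all_cat => /andP[]. Qed.

Lemma count_split (p : pred nat) u i : i < size u ->
  count p u = count p (take i u) + p (nth 0 u i) + count p (drop i.+1 u).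
Proof. by move=> Hi; rewrite -{1}(cat_take_drop i u) (drop_nth 0 Hi) count_cat /= addnA. Qed.

Lemma pair_cnt (p : pred nat) u i j : i < j -> j < size u ->
  p (nth 0 u i) -> p (nth 0 u j) -> 1 < count p u.
Proof.
move=> Hij Hj Pi Pj.
have Hi : i < size u by apply: ltn_trans Hj.
rewrite (@count_split p _ _ Hi) Pi.
have Hd : j - i.+1 < size (drop i.+1 u) by rewrite size_drop; lia.
rewrite (@count_split p _ _ Hd) nth_drop.
have -> : i.+1 + (j - i.+1) = j by lia.
by rewrite Pj; lia.
Qed.

Lemma cnt_pair (p : pred nat) u : 1 < count p u ->
  exists i j, [/\ i < j, j < size u, p (nth 0 u i) & p (nth 0 u j)].
Proof.
elim: u => //= x u IH.
case Px: (p x) => /= H.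
  have Hh : has p u by rewrite has_count; lia.
  exists 0, (find p u).+1; split => //=; last by apply: nth_find.
  by rewrite ltnS -has_find.
have [i [j [H1 H2 H3 H4]]] := IH H.
by exists i.+1, j.+1.
Qed.

Lemma size_take_le k (w : seq nat) : size (take k w) = minn k (size w).
Proof. by rewrite size_take; case: ltnP => H; lia. Qed.

Lemma DF_split s t w :
  (exists i1 j1 i2 j2, [/\ factor_of w s i1 j1, factor_of w t i2 j2 & j1 < i2]) <->
  exists k, 1 < count (pred1 s) (take k w) /\ 1 < count (pred1 t) (drop k w).
Proof.
split.
  move=> [i1 [j1 [i2 [j2 [[a1 b1 c1 d1] [a2 b2 c2 d2] e]]]]].
  exists j1.+1; split.
    apply: (@pair_cnt _ _ i1 j1) => //.
    - by rewrite size_take_le; lia.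
    - by rewrite nth_take /= ?c1 ?eqxx //; lia.
    - by rewrite nth_take /= ?d1 ?eqxx //; lia.
  apply: (@pair_cnt _ _ (i2 - j1.+1) (j2 - j1.+1)); first by lia.
  - by rewrite size_drop; lia.
  - rewrite nth_drop; have -> : j1.+1 + (i2 - j1.+1) = i2 by lia. by rewrite /= c2.
  - rewrite nth_drop; have -> : j1.+1 + (j2 - j1.+1) = j2 by lia. by rewrite /= d2.
move=> [k [/cnt_pair [i [j [H1 H2 H3 H4]]] /cnt_pair [i' [j' [H1' H2' H3' H4']]]]].
move: H2 H3 H4; rewrite size_take_le => H2.
rewrite !nth_take; try lia.
move: H2' H3' H4'; rewrite size_drop !nth_drop => H2' H3' H4'.
exists i, j, (k + i'), (k + j'); split.
- by split => //; [lia | apply/eqP | apply/eqP].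
- by split => //; [lia | lia | apply/eqP | apply/eqP].
- lia.
Qed.

Lemma take_mono (p : pred nat) (w : seq nat) k m : k <= m ->
  count p (take k w) <= count p (take m w).
Proof. by move=> H; rewrite -(subnKC H) takeD count_cat leq_addr. Qed.

Lemma facts w k : word12 w ->
  [/\ count (pred1 1) (take k w) + count (pred1 1) (drop k w) = count (pred1 1) w,
      count (pred1 2) (take k w) + count (pred1 2) (drop k w) = count (pred1 2) w,
      count (pred1 1) (take k w) + count (pred1 2) (take k w) = minn k (size w) &
      count (pred1 1) (drop k w) + count (pred1 2) (drop k w) = size w - k].
Proof.
move=> Hw; split.
- by rewrite -count_cat cat_take_drop.
- by rewrite -count_cat cat_take_drop.
- by rewrite cnt12 ?size_take_le //; apply: word12_take.
- by rewrite cnt12 ?size_drop //; apply: word12_drop.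
Qed.

Lemma DF_iff w : disjoint_factors2 w <->
  (exists k, 1 < count (pred1 1) (take k w) /\ 1 < count (pred1 2) (drop k w)) \/
  (exists k, 1 < count (pred1 2) (take k w) /\ 1 < count (pred1 1) (drop k w)).
Proof.
rewrite -!DF_split; split.
  move=> [i1 [j1 [i2 [j2 [F1 F2 /orP[] H]]]]].
    by left; exists i1, j1, i2, j2.
  by right; exists i2, j2, i1, j1.
case=> [[i1 [j1 [i2 [j2 [F1 F2 H]]]]] | [i1 [j1 [i2 [j2 [F1 F2 H]]]]]].
  by exists i1, j1, i2, j2; split => //; rewrite H.
by exists i2, j2, i1, j1; split => //; rewrite H orbT.
Qed.

Lemma DF_small w : disjoint_factors2 w -> 3 < size w.
Proof.
move=> [i1 [j1 [i2 [j2 [[a1 b1 _ _] [a2 b2 _ _] /orP[] H]]]]]; lia.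
Qed.

Lemma crit_cnt w : word12 w -> 3 < size w ->
  disjoint_factors2 w <->
  [|| (2 < count (pred1 1) w) && (2 < size w - count (pred1 1) w),
      ((count (pred1 1) (take 2 w) == 0) || (count (pred1 1) (drop (size w - 2) w) == 0))
         && (count (pred1 1) w == 2) |
      ((count (pred1 1) (take 2 w) == 2) || (count (pred1 1) (drop (size w - 2) w) == 2))
         && (size w - count (pred1 1) w == 2)].
Proof.
move=> Hw Hn; rewrite DF_iff.
have Hc := cnt12 w Hw.
have [A1 A2 A3 A4] := facts w 2 Hw.
have [B1 B2 B3 B4] := facts w 3 Hw.
have [C1 C2 C3 C4] := facts w (size w - 2) Hw.
split.
  move=> HH.
  have [k HK] : exists k, (1 < count (pred1 1) (take k w) /\ 1 < count (pred1 2) (drop k w)) \/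
     (1 < count (pred1 2) (take k w) /\ 1 < count (pred1 1) (drop k w)).
    by case: HH => -[k ?]; exists k; [left|right].
  have [D1 D2 D3 D4] := facts w k Hw.
  have M1 := @take_mono (pred1 1) w k (size w - 2).
  have M2 := @take_mono (pred1 2) w k (size w - 2).
  have M3 := @take_mono (pred1 1) w 2 k.
  have M4 := @take_mono (pred1 2) w 2 k.
  have Hk1 : k <= size w - 2 -> count (pred1 1) (take k w) <= count (pred1 1) (take (size w - 2) w) /\
                               count (pred1 2) (take k w) <= count (pred1 2) (take (size w - 2) w).
    by move=> Hk; split; [apply: M1|apply: M2].
  have Hk2 : 2 <= k -> count (pred1 1) (take 2 w) <= count (pred1 1) (take k w) /\
                               count (pred1 2) (take 2 w) <= count (pred1 2) (take k w).
    by move=> Hk; split; [apply: M3|apply: M4].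
  clear M1 M2 M3 M4 HH.
  have [Ea|[Eb|Eab]] : count (pred1 1) w = 2 \/ size w - count (pred1 1) w = 2 \/
     (2 < count (pred1 1) w /\ 2 < size w - count (pred1 1) w) by lia.
  + case: HK => -[H1 H2].
    * have [] := Hk1 ltac:(lia) => X1 X2.
      apply/or3P; apply: Or32; apply/andP; split; [apply/orP; right|]; apply/eqP; lia.
    * have [] := Hk2 ltac:(lia) => X1 X2.
      apply/or3P; apply: Or32; apply/andP; split; [apply/orP; left|]; apply/eqP; lia.
  + case: HK => -[H1 H2].
    * have [] := Hk2 ltac:(lia) => X1 X2.
      apply/or3P; apply: Or33; apply/andP; split; [apply/orP; left|]; apply/eqP; lia.
    * have [] := Hk1 ltac:(lia) => X1 X2.
      apply/or3P; apply: Or33; apply/andP; split; [apply/orP; right|]; apply/eqP; lia.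
  + by apply/or3P; apply: Or31; apply/andP; case: Eab => -> ->.
case/or3P => [/andP[H1 H2] | /andP[/orP[H1|H1] H2] | /andP[/orP[H1|H1] H2]].
- have [T|T] := leqP 2 (count (pred1 1) (take 3 w)); [left|right]; exists 3; lia.
- by right; exists 2; lia.
- by left; exists (size w - 2); lia.
- by left; exists 2; lia.
- by right; exists (size w - 2); lia.
Qed.

Lemma take2 w : 1 < size w -> count (pred1 1) (take 2 w) = (nth 0 w 0 == 1) + (nth 0 w 1 == 1).
Proof. by case: w => [|x0 [|x1 r]] //= _; rewrite take0 /= addn0. Qed.

Lemma drop2 w : 1 < size w ->
  count (pred1 1) (drop (size w - 2) w) = (nth 0 w (size w - 2) == 1) + (nth 0 w (size w - 1) == 1).
Proof.
move=> H.
rewrite (drop_nth 0 (_ : size w - 2 < size w)); last by lia.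
rewrite (drop_nth 0 (_ : (size w - 2).+1 < size w)); last by lia.
have -> : (size w - 2).+2 = size w by lia.
have -> : (size w - 2).+1 = size w - 1 by lia.
by rewrite drop_size /= addn0.
Qed.

Lemma sym_sum x y : is_symbol x -> is_symbol y ->
  (3 < x + y) = ((x == 1) + (y == 1) == 0) /\ (x + y < 3) = ((x == 1) + (y == 1) == 2).
Proof. by case/orP => /eqP -> /orP[] /eqP ->. Qed.

Lemma crit_val w : word12 w -> 3 < size w ->
  disjoint_factors2 w <->
  [|| (2 < count (pred1 1) w) && (2 < size w - count (pred1 1) w),
      ((3 < nth 0 w 0 + nth 0 w 1) || (3 < nth 0 w (size w - 2) + nth 0 w (size w - 1)))
         && (count (pred1 1) w == 2) |
      ((nth 0 w 0 + nth 0 w 1 < 3) || (nth 0 w (size w - 2) + nth 0 w (size w - 1) < 3))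
         && (size w - count (pred1 1) w == 2)].
Proof.
move=> Hw Hn; have H1 : 1 < size w by lia.
rewrite crit_cnt // take2 // drop2 //.
have Hs i : i < size w -> is_symbol (nth 0 w i) by move=> Hi; apply: (all_nthP 0 Hw).
have [-> ->] := sym_sum _ _ (Hs 0 ltac:(lia)) (Hs 1 ltac:(lia)).
have [-> ->] := sym_sum _ _ (Hs (size w - 2) ltac:(lia)) (Hs (size w - 1) ltac:(lia)).
exact: iff_refl.
Qed.

Arguments eval_binop : simpl never.
Arguments wmod : simpl never.

Definition p_init : program :=
  [:: IBin OAdd 3 1 0; IConst 6 1; IBin OLt 7 5 3; IJz 7 9; ILoad 8 5;
      IBin OEq 8 8 6; IBin OAdd 4 4 8; IBin OAdd 5 5 6; IJmp 2; IHalt].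

Definition p_upd : program :=
  [:: ILoad 5 1; IConst 6 1; IBin OEq 7 5 6; IBin OEq 8 2 6;
      IBin OSub 4 4 7; IBin OAdd 4 4 8; IStore 1 2; IHalt].

Definition p_q : program :=
  [:: IConst 10 0; IConst 11 1; IConst 12 2; IConst 13 3;
      IBin OSub 5 3 4; IBin OLt 6 12 4; IBin OLt 7 12 5; IBin OMul 6 6 7;
      IBin OLt 7 13 3; ILoad 8 10; ILoad 9 11; IBin OAdd 8 8 9;
      IBin OSub 9 3 12; ILoad 14 9; IBin OSub 9 3 11; ILoad 9 9;
      IBin OAdd 9 14 9; IBin OLt 14 13 8; IBin OLt 15 13 9;
      IBin OEq 14 14 10; IBin OEq 15 15 10; IBin OMul 14 14 15;
      IBin OEq 14 14 10; IBin OEq 15 4 12; IBin OMul 14 14 15;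
      IBin OMul 14 14 7; IBin OLt 15 8 13; IBin OLt 16 9 13;
      IBin OEq 15 15 10; IBin OEq 16 16 10; IBin OMul 15 15 16;
      IBin OEq 15 15 10; IBin OEq 16 5 12; IBin OMul 15 15 16;
      IBin OMul 15 15 7; IBin OEq 6 6 10; IBin OEq 14 14 10;
      IBin OEq 15 15 10; IBin OMul 6 6 14; IBin OMul 6 6 15;
      IBin OEq 0 6 10; IHalt].


Definition runs ws p s t s' := exists fuel, exec ws p fuel s = Some (t, s').

Lemma run_stepE ws p s t s' :
  (if step ws p s is Some s1 then runs ws p s1 t s' else False) -> runs ws p s t.+1 s'.
Proof.
case E: (step ws p s) => [s1|] // [f Hf]; exists f.+1 => /=.
by rewrite E Hf.
Qed.

Lemma run_halt ws p s : step ws p s = None -> runs ws p s 0 s.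
Proof. by move=> E; exists 1 => /=; rewrite E. Qed.

Definition wp ws p s t (Q : conf -> Prop) := exists s', runs ws p s t s' /\ Q s'.

Lemma wp_step ws p s t Q :
  (if step ws p s is Some s1 then wp ws p s1 t Q else False) -> wp ws p s t.+1 Q.
Proof.
case E: (step ws p s) => [s1|] // [s' [R HQ]]; exists s'; split=> //.
by apply: run_stepE; rewrite E.
Qed.

Lemma wp_halt ws p s Q : step ws p s = None -> Q s -> wp ws p s 0 Q.
Proof. by move=> E HQ; exists s; split=> //; apply: run_halt. Qed.

Ltac rem_new :=
  match goal with
  | |- wp _ _ (Conf _ (upd _ _ ?val) _) _ _ =>
      tryif is_var val then idtac else
      (let v := fresh "v" in let E := fresh "E" in
      remember val as v eqn:E; rewrite /upd /= in E)
  | _ => idtac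
  end.

Lemma updE (f : nat -> nat) k v x : upd f k v x = if x == k then v else f x.
Proof. by []. Qed.

Ltac stp := apply: wp_step; simpl; rem_new.


Lemma powE m n : Nat.pow m n = m ^ n.
Proof. by elim: n => //= n IH; rewrite IH expnS. Qed.

Section Arith.
Variable ws : nat.
Hypothesis HW : 16 <= 2 ^ ws.

Lemma wmod_small x : x < 2 ^ ws -> wmod ws x = x.
Proof. by move=> H; rewrite /wmod powE modn_small. Qed.

Lemma wmod_c k : k < 16 -> wmod ws k = k.
Proof. by move=> H; apply: wmod_small; apply: leq_trans HW. Qed.

Lemma ev_eq x y : eval_binop ws OEq x y = (x == y).
Proof. by rewrite /eval_binop wmod_c //; case: (x == y). Qed.

Lemma ev_lt x y : eval_binop ws OLt x y = (x < y).
Proof. by rewrite /eval_binop wmod_c //; case: (x < y). Qed.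

Lemma ev_mulb (b1 b2 : bool) : eval_binop ws OMul b1 b2 = (b1 && b2).
Proof. by rewrite /eval_binop wmod_c //; case: b1; case: b2. Qed.

Lemma ev_sub x y : y <= x -> x < 2 ^ ws -> eval_binop ws OSub x y = x - y.
Proof.
move=> H1 H2; rewrite /eval_binop /wmod powE -addnBAC // modnDr modn_small //.
by apply: leq_ltn_trans H2; apply: leq_subr.
Qed.

Lemma ev_add x y : x + y < 2 ^ ws -> eval_binop ws OAdd x y = x + y.
Proof. by move=> H; rewrite /eval_binop wmod_small. Qed.
End Arith.

Definition Inv n cur s :=
  [/\ size cur = n, word12 cur, regs s 3 = n, regs s 4 = count (pred1 1) cur &
      forall x, x < n -> Defs.mem s x = nth 0 cur x].

Lemma q_ok ws n cur s : 16 <= 2 ^ ws -> n < 2 ^ ws -> Inv n cur s ->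
  wp ws p_q (Conf 0 (regs s) (Defs.mem s)) 41
     (fun s' => (regs s' 0 != 0 <-> disjoint_factors2 cur) /\ Inv n cur s').
Proof.
move=> HW Hn [Hs Hw H3 H4 Hm].
do 41 stp.
apply: wp_halt => //.
rewrite /= /upd /=.
split; last first.
  by split.
subst.
rewrite H3 H4 (@wmod_c ws HW 0 isT) (@wmod_c ws HW 1 isT) (@wmod_c ws HW 2 isT) (@wmod_c ws HW 3 isT).
rewrite !(@ev_eq ws HW) !(@ev_lt ws HW) !(@ev_mulb ws HW) !eqb0 negbK.
rewrite (@ev_sub ws _ _ (count_size _ _) Hn).
case: (leqP (size cur) 3) => Hn3.
  rewrite ?andbF /= !andbT negbK; split => [/andP[] | /DF_small]; lia.
have Hsym i : i < size cur -> nth 0 cur i <= 2.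
  by move=> Hi; case/orP: (all_nthP 0 Hw i Hi) => /eqP ->.
rewrite (@ev_sub ws (size cur) 2) ?(@ev_sub ws (size cur) 1); try lia.
rewrite !Hm; try lia.
have H01 := Hsym 0 ltac:(lia).
have H11 := Hsym 1 ltac:(lia).
have H21 := Hsym (size cur - 2) ltac:(lia).
have H31 := Hsym (size cur - 1) ltac:(lia).
rewrite !(@ev_add ws); try lia.
rewrite crit_val //.
case: (2 < count_mem 1 cur); case: (2 < size cur - count_mem 1 cur);
case: (count_mem 1 cur == 2); case: (size cur - count_mem 1 cur == 2);
case: (3 < nth 0 cur 0 + nth 0 cur 1); case: (3 < nth 0 cur (size cur - 2) + nth 0 cur (size cur - 1));
case: (nth 0 cur 0 + nth 0 cur 1 < 3); case: (nth 0 cur (size cur - 2) + nth 0 cur (size cur - 1) < 3);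
by [].
Qed.

Lemma count_set (p : pred nat) s i y : i < size s ->
  count p (set_nth 0 s i y) + p (nth 0 s i) = count p s + p y.
Proof.
elim: s i => [|a s IH] [|i] //= Hi; first lia.
have := IH i Hi; lia.
Qed.

Lemma word12_set s i y : i < size s -> is_symbol y -> word12 s -> word12 (set_nth 0 s i y).
Proof.
move=> Hi Hy /(all_nthP 0) H; apply/(all_nthP 0) => j.
rewrite size_set_nth nth_set_nth /= => Hj.
case: eqP => // Hji; apply: H; lia.
Qed.

Lemma u_ok ws n cur s i x : 16 <= 2 ^ ws -> n < 2 ^ ws -> Inv n cur s -> i < n -> is_symbol x ->
  wp ws p_upd (Conf 0 (upd (upd (regs s) 1 i) 2 x) (Defs.mem s)) 7 (Inv n (set_nth 0 cur i x)).
Proof.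
move=> HW Hn [Hs Hw H3 H4 Hm] Hi Hx.
do 7 stp.
apply: wp_halt => //.
rewrite /= /upd /=.
subst.
have HC := @count_set (pred1 1) cur i x Hi.
have HC2 := @count_split (pred1 1) cur i Hi.
split.
- by rewrite size_set_nth; apply/maxn_idPr.
- exact: word12_set.
- by [].
- rewrite H4 (@wmod_c ws HW 1 isT) !(@ev_eq ws HW) Hm //.
  rewrite (@ev_sub ws); last first.
  + by apply: leq_ltn_trans Hn; apply: count_size.
  + move: HC2 => /=; lia.
  have HS := count_size (pred1 1) (set_nth 0 cur i x).
  rewrite size_set_nth (maxn_idPr Hi) in HS.
  rewrite (@ev_add ws); move: HC HS HC2 => /=; lia.
- move=> y Hy; rewrite nth_set_nth /=.
  by case: eqP => // _; apply: Hm.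
Qed.

Lemma loop ws w : word12 w -> 16 <= 2 ^ ws -> size w < 2 ^ ws ->
  forall k r i, i + k = size w -> r 3 = size w -> r 5 = i -> r 6 = 1 ->
  r 4 = count (pred1 1) (take i w) ->
  wp ws p_init (Conf 2 r (fun x => nth 0 w x)) (7 * k + 2) (Inv (size w) w).
Proof.
move=> Hw HW Hn; elim=> [|k IH] r i Hik H3 H5 H6 H4.
  rewrite muln0 add0n.
  stp.
  apply: wp_step; simpl.
  rewrite updE /= E H5 H3 (@ev_lt ws HW) (_ : i = size w); last by lia.
  rewrite ltnn /=.
  apply: wp_halt => //.
  split => //=; rewrite /upd /= H4 take_oversize //; lia.
rewrite (_ : 7 * k.+1 + 2 = (7 * k + 2).+4.+3); last by lia.
stp.
apply: wp_step; simpl.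
rewrite updE /= E H5 H3 (@ev_lt ws HW) (_ : i < size w = true) /=; last by apply/ltP; lia.
do 5 stp.
apply: (IH _ i.+1); rewrite /upd /=.
- lia.
- by [].
- rewrite E3 H5 H6 (@ev_add ws) //; lia.
- by [].
- rewrite E2 E1 E0 H4 H5 H6 (@ev_eq ws HW) (@ev_add ws).
    by rewrite (take_nth 0 (_ : i < size w)) -?cats1 ?count_cat /= ?addn0 //; lia.
  have := count_size (pred1 1) (take i w); rewrite size_take_le.
  case: (_ == _); lia.
Qed.

Lemma init_ok ws w : word12 w -> 16 <= 2 ^ ws -> size w < 2 ^ ws ->
  wp ws p_init (Conf 0 (regs (init_conf w)) (Defs.mem (init_conf w))) (7 * size w + 4)
     (Inv (size w) w).
Proof.
move=> Hw HW Hn.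
rewrite (_ : 7 * size w + 4 = (7 * size w + 2).+2); last by lia.
stp; stp.
apply: (@loop ws w Hw HW Hn (size w) _ 0); rewrite /upd /=.
- by [].
- by subst; rewrite (@ev_add ws) addn0 //; lia.
- by [].
- by subst; rewrite (@wmod_c ws HW 1 isT).
- by rewrite take0.
Qed.

Definition DS := DynDS p_init p_upd p_q.

Lemma serve_ok ws n : 16 <= 2 ^ ws -> n < 2 ^ ws ->
  forall ops cur s B, Inv n cur s -> all (valid_op n) ops -> 41 * size ops <= B ->
  serves ws DS ops cur s B.
Proof.
move=> HW Hn; elim=> [|o ops IH] cur s B HI //= /andP[Ho Hops] HB.
case: o Ho => [i x /andP[Hi Hx] | _].
  have [s' [[f Hf] HI']] := @u_ok ws n cur s i x HW Hn HI Hi Hx.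
  exists 7, s'; split; first by exists f.
    lia.
  apply: IH => //; lia.
have [s' [[f Hf] [HQ HI']]] := @q_ok ws n cur s HW Hn HI.
exists 41, s'; split => //; first by exists f.
  lia.
apply: IH => //; lia.
Qed.

Theorem lemma33 :
  exists (D : dyn_ds) (C c : nat),
    forall (ws : nat) (w : seq nat) (ops : seq operation),
      word12 w ->
      c * (trunc_log 2 (size w)).+1 <= ws ->
      all (valid_op (size w)) ops ->
      runs_within ws D w ops (C * (size w + size ops + 1)).
Proof.
exists DS, 41, 4 => ws w ops Hw Hws Hops.
have Hl := @trunc_log_ltn 2 (size w) isT.
have Hp : 2 ^ (4 * (trunc_log 2 (size w)).+1) <= 2 ^ ws by apply: leq_pexp2l.
have Hp1 : 2 ^ (trunc_log 2 (size w)).+1 <= 2 ^ (4 * (trunc_log 2 (size w)).+1)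
  by apply: leq_pexp2l => //; lia.
have Hp2 : 2 ^ 4 <= 2 ^ (4 * (trunc_log 2 (size w)).+1)
  by apply: leq_pexp2l => //; lia.
have HW : 16 <= 2 ^ ws by apply: leq_trans Hp; apply: Hp2.
have Hn : size w < 2 ^ ws by apply: leq_trans Hp; apply: leq_trans Hp1.
have [s [[f Hf] HI]] := @init_ok ws w Hw HW Hn.
exists (7 * size w + 4), s; split; first by exists f.
  lia.
apply: (@serve_ok ws (size w)) => //; lia.
Qed.
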